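(* Let $A$ and $A'$ be conjunctors on $[0,1]$ both having $1$ as a left neutral element, and suppose $A$ is left-continuous with respect to its second variable. Let $I_A(x,y)=\sup\{t\in[0,1]\mid A(x,t)\le y\}$ be the R-implication generated by $A$. Then $I_A$ satisfies (A5) with $A'$ if and only if $A'\le A$ (i.e. $A'(x,y)\le A(x,y)$ for all $x,y\in[0,1]$).
   Context: An aggregation function is a map $A:[0,1]^2\to[0,1]$, non-decreasing in each variable, with $A(0,0)=0$, $A(1,1)=1$. It is a conjunctor if moreover $A(1,0)=A(0,1)=0$. The element $1$ is a left neutral element of $A$ if $A(1,x)=x$ for all $x\in[0,1]$. A fuzzy set on a nonempty set $U$ is a map $D:U\to[0,1]$; it is normal if $D(x_0)=1$ for some $x_0\in U$. For a binary function $I$ on $[0,1]$ and an aggregation function $A'$, ''$I$ satisfies (A5) with $A'$'' means: for all nonempty sets $U,V$, all normal fuzzy sets $D$ on $U$ and $B$ on $V$, and every $y\in V$, $\sup_{x\in U}A'(D(x),I(D(x),B(y)))=B(y)$ (i.e. the inference $B'(y)=\sup_{x\in U}A'(D'(x),I(D(x),B(y)))$ returns $B'=B$ when $D'=D$). *)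

(* Defs.v *)
From Stdlib Require Import Reals.
From Coquelicot Require Import Coquelicot.
Open Scope R_scope.

Definition unit_I (x : R) : Prop := 0 <= x <= 1.

(* Binary functions on [0,1] are represented as R -> R -> R; only their values
   on [0,1]^2 matter. *)
Definition aggregation (A : R -> R -> R) : Prop :=
  (forall x y, unit_I x -> unit_I y -> unit_I (A x y)) /\
  (forall x x' y y', unit_I x -> unit_I x' -> unit_I y -> unit_I y' ->
     x <= x' -> y <= y' -> A x y <= A x' y') /\
  A 0 0 = 0 /\ A 1 1 = 1.

Definition conjunctor (A : R -> R -> R) : Prop :=
  aggregation A /\ A 1 0 = 0 /\ A 0 1 = 0.

Definition left_neutral_one (A : R -> R -> R) : Prop :=
  forall x, unit_I x -> A 1 x = x.

Definition left_continuous_2nd (A : R -> R -> R) : Prop :=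
  forall x y, unit_I x -> unit_I y -> 0 < y ->
    forall eps, 0 < eps -> exists delta, 0 < delta /\
      forall t, 0 <= t -> y - delta < t -> t <= y -> Rabs (A x t - A x y) < eps.

Definition R_impl (A : R -> R -> R) (x y : R) : R :=
  real (Lub_Rbar (fun t => unit_I t /\ A x t <= y)).

Definition fuzzy_set {U : Type} (D : U -> R) : Prop := forall u, unit_I (D u).
Definition normal {U : Type} (D : U -> R) : Prop := exists u, D u = 1.

Definition satisfies_A5 (I A' : R -> R -> R) : Prop :=
  forall (U V : Type) (D : U -> R) (B : V -> R),
    fuzzy_set D -> fuzzy_set B -> normal D -> normal B ->
    forall y : V,
      is_lub (fun z => exists x : U, z = A' (D x) (I (D x) (B y))) (B y).

(* Main.v *)
Require Import Defs.
From Stdlib Require Import Reals Lra Classical.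
From Coquelicot Require Import Coquelicot.
Open Scope R_scope.
Ltac ui := unfold unit_I in *; repeat split; lra.

Lemma R_impl_props (A : R -> R -> R) x y : conjunctor A -> unit_I x -> unit_I y ->
  0 <= R_impl A x y <= 1 /\
  (forall t, unit_I t -> A x t <= y -> t <= R_impl A x y) /\
  (forall t, 0 <= t < R_impl A x y -> A x t <= y).
Proof.
  intros [[Hr [Hm [H00 H11]]] [H10 H01]] Hx Hy.
  unfold R_impl.
  set (E := fun t => unit_I t /\ A x t <= y).
  assert (HE0 : E 0).
  { split. ui.
    assert (A x 0 <= A 1 0) by (apply Hm; ui). ui. }
  destruct (Lub_Rbar_correct E) as [Hub Hlub].
  assert (H0 := Hub 0 HE0).
  assert (H1 : Rbar_le (Lub_Rbar E) 1).
  { apply Hlub. intros t [[_ Ht] _]. simpl. exact Ht. }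
  destruct (Lub_Rbar E) as [s| |] eqn:Hs; simpl in H0, H1; try contradiction.
  simpl. split; [lra|]. split.
  - intros t Ht Ha. exact (Hub t (conj Ht Ha)).
  - intros t Ht.
    destruct (classic (exists t', E t' /\ t < t')) as [[t' [[Ht'1 Ht'2] Ht'3]]|Hn].
    + assert (A x t <= A x t') by (apply Hm; ui). lra.
    + exfalso.
      assert (Hb : Rbar_le s t).
      { apply Hlub. intros u Hu. simpl.
        destruct (Rle_dec u t) as [h|h]; [exact h|].
        exfalso; apply Hn; exists u; split; [exact Hu|lra]. }
      simpl in Hb. lra.
Qed.

Lemma R_impl_le (A : R -> R -> R) x y : conjunctor A -> left_continuous_2nd A ->
  unit_I x -> unit_I y -> A x (R_impl A x y) <= y.
Proof.
  intros HA Hlc Hx Hy.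
  destruct (R_impl_props A x y HA Hx Hy) as [Hs [_ Hlt]].
  destruct HA as [[Hr [Hm [H00 H11]]] [H10 H01]].
  set (s := R_impl A x y) in *.
  destruct (Req_dec s 0) as [Hs0|Hs0].
  - rewrite Hs0. assert (A x 0 <= A 1 0) by (apply Hm; ui).
    unfold unit_I in Hy; lra.
  - destruct (Rle_dec (A x s) y) as [h|h]; [exact h|exfalso].
    assert (Hsu : unit_I s) by (ui).
    destruct (Hlc x s Hx Hsu ltac:(lra) (A x s - y) ltac:(lra)) as [d [Hd Hdd]].
    set (t := Rmax 0 (s - d/2)).
    assert (Ht0 : 0 <= t) by apply Rmax_l.
    assert (Ht1 : s - d/2 <= t) by apply Rmax_r.
    assert (Ht2 : t < s).
    { unfold t. apply Rmax_lub_lt; lra. }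
    specialize (Hdd t Ht0 ltac:(lra) ltac:(lra)).
    specialize (Hlt t (conj Ht0 Ht2)).
    apply Rabs_def2 in Hdd. lra.
Qed.

Theorem theorem4p3 (A A' : R -> R -> R) :
  conjunctor A -> conjunctor A' ->
  left_neutral_one A -> left_neutral_one A' ->
  left_continuous_2nd A ->
  (satisfies_A5 (R_impl A) A' <->
   (forall x y, unit_I x -> unit_I y -> A' x y <= A x y)).
Proof.
  intros HA HA' HnA HnA' Hlc. split.
  - intros H5 x y Hx Hy.
    assert (HAr : unit_I (A x y)) by (apply (proj1 (proj1 HA)); assumption).
    set (D := fun b : bool => if b then 1 else x).
    set (B := fun b : bool => if b then 1 else A x y).
    assert (HD : fuzzy_set D) by (intros [|]; simpl; ui).
    assert (HB : fuzzy_set B) by (intros [|]; simpl; ui).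
    destruct (H5 bool bool D B HD HB (ex_intro _ true eq_refl) (ex_intro _ true eq_refl) false)
      as [Hub _].
    specialize (Hub (A' x (R_impl A x (A x y))) (ex_intro _ false eq_refl)).
    simpl in Hub.
    destruct (R_impl_props A x (A x y) HA Hx HAr) as [Hs [Hge _]].
    assert (y <= R_impl A x (A x y)) by (apply Hge; [assumption|lra]).
    destruct HA' as [[_ [Hm' _]] _].
    assert (A' x y <= A' x (R_impl A x (A x y)))
      by (apply Hm'; ui).
    lra.
  - intros Hle U V D B HD HB [u0 Hu0] _ y. split.
    + intros z [u ->].
      destruct (R_impl_props A (D u) (B y) HA (HD u) (HB y)) as [Hs _].
      assert (A' (D u) (R_impl A (D u) (B y)) <= A (D u) (R_impl A (D u) (B y)))
        by (apply Hle; [apply HD|exact Hs]).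
      assert (A (D u) (R_impl A (D u) (B y)) <= B y)
        by (apply R_impl_le; auto).
      lra.
    + intros b Hb. apply Hb. exists u0. rewrite Hu0.
      assert (Hi : R_impl A 1 (B y) = B y).
      { assert (H1 : unit_I 1) by (ui).
        destruct (R_impl_props A 1 (B y) HA H1 (HB y)) as [Hs [Hge _]].
        assert (B y <= R_impl A 1 (B y)) by (apply Hge; [apply HB| rewrite HnA; [lra|apply HB]]).
        assert (A 1 (R_impl A 1 (B y)) <= B y) by (apply R_impl_le; auto).
        rewrite HnA in H0 by exact Hs. lra. }
      rewrite Hi. rewrite HnA' by apply HB. reflexivity.
Qed.
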